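(* Let $G$ be a group, $E$ a real Banach space, and $f\colon G\to E$ such that $\|f(xy)+f(xy^{-1})-2f(x)\|\le c$ for all $x,y\in G$, where $c>0$. Define $c_1=c+2\|f(1)\|$, $c_2=c+\|f(1)\|$, $c_3=c+c_1$, and $c_m=c+c_1+c_{m-2}$ for $m>3$. Then for every $x\in G$ and every $m\in\mathbb{N}$, $\|f(x^m)-mf(x)\|\le c_m$. *)

(* Defs.v *)
From HB Require Import structures.
From mathcomp Require Import all_boot all_order all_algebra.
From mathcomp Require Import all_classical all_reals all_analysis.
Set Implicit Arguments. Unset Strict Implicit. Unset Printing Implicit Defensive.
Import Order.TTheory GRing.Theory Num.Theory.
Import numFieldNormedType.Exports.
Local Open Scope ring_scope.

Definition is_group (G : Type) (mul : G -> G -> G) (inv : G -> G) (one : G) : Prop :=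
  [/\ (forall x y z, mul x (mul y z) = mul (mul x y) z),
      (forall x, mul one x = x), (forall x, mul x one = x),
      (forall x, mul (inv x) x = one) & (forall x, mul x (inv x) = one)].

Fixpoint gpow (G : Type) (mul : G -> G -> G) (one : G) (x : G) (m : nat) : G :=
  match m with 0 => one | k.+1 => mul x (gpow mul one x k) end.

(* The constants c_m of the paper, with a := ||f(1)||:
   c_1 = c + 2a, c_2 = c + a, c_3 = c + c_1, c_m = c + c_1 + c_{m-2} (m > 3).
   c_0 is not defined in the paper; we set it to 0 (it is never used since
   the statement quantifies over m >= 1). *)
Fixpoint cconst (R : numDomainType) (c a : R) (m : nat) : R :=
  match m with
  | 0 => 0
  | 1 => c + 2 * a
  | 2 => c + a
  | 3 => c + (c + 2 * a)
  | (k.+2 as n).+2 => c + (c + 2 * a) + cconst c a n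
  end.

(* Main.v *)
Require Import Defs.
From HB Require Import structures.
From mathcomp Require Import all_boot all_order all_algebra.
From mathcomp Require Import all_classical all_reals all_analysis.
Import Order.TTheory GRing.Theory Num.Theory.
Import numFieldNormedType.Exports.
Local Open Scope ring_scope.

Lemma alg_id (V : zmodType) (A B P t u : V) :
  A - (t + u) = (A + B - t) - (P + B) + (P - u).
Proof.
rewrite opprD (addrC P B) opprD !addrA subrK.
by rewrite (addrAC (A+B)) addrK.
Qed.

Theorem lemma2p3 (R : realType) (E : completeNormedModType R)
  (G : Type) (mul : G -> G -> G) (inv : G -> G) (one : G)
  (hG : is_group mul inv one)
  (f : G -> E) (c : R) (hc : 0 < c)
  (hf : forall x y : G, `| f (mul x y) + f (mul x (inv y)) - 2%:R *: f x | <= c) :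
  forall (x : G) (m : nat), (1 <= m)%N ->
    `| f (gpow mul one x m) - m%:R *: f x | <= cconst c `| f one | m.
Proof.
case: hG => mA m1l m1r mVl mVr.
move=> x.
have gS : forall k, gpow mul one x k.+1 = mul (gpow mul one x k) x.
  elim=> [|k IH]; first by rewrite /= m1l m1r.
  change (mul x (gpow mul one x k.+1) = mul (gpow mul one x k.+1) x).
  by rewrite IH mA -IH.
have key : forall k, mul x (inv (gpow mul one x k.+2)) = inv (gpow mul one x k.+1).
  move=> k; set z := gpow mul one x k.+1.
  have hw : gpow mul one x k.+2 = mul z x by rewrite gS.
  rewrite hw.
  have h1 : mul z (mul x (inv (mul z x))) = one by rewrite mA mVr.
  by rewrite -[LHS]m1l -(mVl z) -mA h1 m1r.
have a0 : 0 <= `|f one| by [].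
have step : forall k, `| f (gpow mul one x k.+3) - k.+3%:R *: f x |
   <= c + (c + 2 * `|f one|) + `| f (gpow mul one x k.+1) - k.+1%:R *: f x |.
  move=> k.
  have H1 := hf x (gpow mul one x k.+2).
  rewrite key in H1.
  have H2 := hf one (gpow mul one x k.+1).
  rewrite !m1l in H2.
  set A := f (gpow mul one x k.+3) in H1 *.
  set B := f (inv (gpow mul one x k.+1)) in H1 H2 *.
  set P := f (gpow mul one x k.+1) in H2 *.
  have H3 : `|P + B| <= c + 2 * `|f one|.
    have -> : P + B = (P + B - 2%:R *: f one) + 2%:R *: f one by rewrite subrK.
    apply: (le_trans (ler_normD _ _)); apply: lerD => //.
    by rewrite normrZ ger0_norm.
  have -> : A - k.+3%:R *: f x = (A + B - 2%:R *: f x) - (P + B) + (P - k.+1%:R *: f x).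
    rewrite -[k.+3]addn2 natrD scalerDl (addrC (k.+1%:R *: f x)); exact: alg_id.
  apply: (le_trans (ler_normD _ _)); apply: lerD => //.
  apply: (le_trans (ler_normB _ _)); exact: lerD.
have main : forall k, `| f (gpow mul one x k.+1) - k.+1%:R *: f x | <= cconst c `|f one| k.+1
   /\ `| f (gpow mul one x k.+2) - k.+2%:R *: f x | <= cconst c `|f one| k.+2.
  elim=> [|k [IH1 IH2]].
  - split.
      have -> : gpow mul one x 1 = x by rewrite /= m1r.
      rewrite scale1r subrr normr0 [cconst _ _ _]/=; apply: addr_ge0; [exact: ltW|].
      by apply: mulr_ge0.
    have H := hf x x. rewrite mVr in H.
    have -> : gpow mul one x 2 = mul x x by rewrite /= m1r.
    rewrite [cconst _ _ _]/=.
    have -> : f (mul x x) - 2%:R *: f x = (f (mul x x) + f one - 2%:R *: f x) - f one.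
      by rewrite addrAC addrK.
    apply: le_trans (ler_normB _ _) _. exact: (lerD H (lexx _)).
  - split => //.
    apply: (le_trans (step k)).
    case: k IH1 {IH2} => [|k] IH1.
      have -> : gpow mul one x 1 = x by rewrite /= m1r.
      by rewrite scale1r subrr normr0 addr0.
    have E4 : cconst c `|f one| k.+4 = c + (c + 2 * `|f one|) + cconst c `|f one| k.+2 by [].
    rewrite E4; apply: lerD => //; exact: lexx.
case=> [|k] // _. exact: (proj1 (main k)).
Qed.
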